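(* Let $\eta: V\to\omega\times\omega$, written $\eta(x)=(\eta_1(x),\eta_2(x))$, be such that $\eta_2$ is unbounded on $A_1$ and unbounded on each set $\{i\}\times\omega\subseteq A_2$, $i\in\omega$. Then there is no homomorphism $G_\eta\to G^1$.
   Context: Graphs are simple and loopless; homomorphisms are edge-preserving vertex maps. $G^1$ is the graph with vertex set $\omega\times\{0,1\}$ whose edges are all pairs $\{(n,i),(m,i)\}$ with $n\ne m$, $i\in\{0,1\}$, $\lfloor\sqrt n\rfloor=\lfloor\sqrt m\rfloor$, together with all pairs $\{(n,0),(m,1)\}$ with $n<m$. Fix finite graphs $G_{j,i}$ ($i,j\in\omega$), each with at least one vertex, such that $\chi(G_{j,i})\ge i$ and $G_{j,i}$ contains no odd cycle of length $\le j$. Let $T$ be the tree with vertex set $V=A_0\cup A_1\cup A_2$, $A_0=\{r\}$, $A_1=\omega$, $A_2=\omega\times\omega$, and edge set $E$ consisting of all pairs $\{r,i\}$ ($i\in\omega$) and $\{i,(i,j)\}$ ($i,j\in\omega$). For $\eta:V\to\omega\times\omega$, $G_\eta$ is the graph obtained by taking, for each $x\in V$, a vertex-disjoint copy $G^x$ of $G_{\eta(x)}$, and adding all edges $\{a,b\}$ with $a\in V(G^x)$, $b\in V(G^y)$ whenever $\{x,y\}\in E$. *)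

(* Defs.v *)
From mathcomp Require Import all_boot.
From Stdlib Require Import PeanoNat.
Set Implicit Arguments. Unset Strict Implicit. Unset Printing Implicit Defensive.

Definition chi_ge (T : finType) (e : rel T) (i : nat) : Prop :=
  forall k, k < i ->
    ~ (exists c : T -> nat, (forall v, c v < k) /\ (forall u v, e u v -> c u <> c v)).

Definition is_cycle (T : finType) (e : rel T) (L : nat) (c : nat -> T) : Prop :=
  3 <= L /\
  (forall s t, s < L -> t < L -> c s = c t -> s = t) /\
  (forall t, t < L -> e (c t) (c ((t.+1) %% L))).

Definition no_short_odd_cycle (T : finType) (e : rel T) (j : nat) : Prop :=
  forall L (c : nat -> T), odd L -> L <= j -> ~ is_cycle e L c.

(* ---- the graph G^1 on omega x {0,1}  (false = 0, true = 1) ---- *)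
Definition G1_edge (p q : nat * bool) : Prop :=
  (p.2 = q.2 /\ p.1 <> q.1 /\ Nat.sqrt p.1 = Nat.sqrt q.1)
  \/ (p.2 = false /\ q.2 = true /\ p.1 < q.1)
  \/ (p.2 = true /\ q.2 = false /\ q.1 < p.1).

(* ---- the tree T: V = {r} u omega u omega x omega ---- *)
Inductive TV : Type :=
| Vr : TV
| V1 : nat -> TV
| V2 : nat -> nat -> TV.

Definition tedge (x y : TV) : Prop :=
  match x, y with
  | Vr, V1 _ => True
  | V1 _, Vr => True
  | V1 i, V2 i' _ => i = i'
  | V2 i' _, V1 i => i = i'
  | _, _ => False
  end.

Section Geta.
Variable GT : nat -> nat -> finType.
Variable Ge : forall j i, rel (GT j i).
Variable eta : TV -> nat * nat.

Definition Geta_vert : Type := {x : TV & GT (eta x).1 (eta x).2}.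

Definition Geta_edge (u v : Geta_vert) : Prop :=
  (exists x (a b : GT (eta x).1 (eta x).2),
      u = existT _ x a /\ v = existT _ x b /\ Ge a b)
  \/ tedge (projT1 u) (projT1 v).
End Geta.

(* Main.v *)
Require Import Defs.
From Stdlib Require Import PeanoNat Lia.
From mathcomp Require Import all_boot.
From mathcomp Require Import zify.

Lemma sqrt_bound m n : Nat.sqrt m = Nat.sqrt n -> m < (n.+1) * (n.+1).
Proof.
move=> E.
have [_ H1] := Nat.sqrt_spec m (Nat.le_0_l m).
have H2 := Nat.sqrt_le_lin n.
rewrite E in H1.
have H4 : S (Nat.sqrt n) * S (Nat.sqrt n) <= S n * S n by nia.
apply/ltP; lia.
Qed.

Lemma G1_bound p q : G1_edge p q ->
  q.1 < (p.1.+1) * (p.1.+1) \/ (p.2 = false /\ q.2 = true).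
Proof.
case: p q => [n s] [m t] /=.
rewrite /G1_edge /=.
case=> [[_ [_ E]]|[[-> [-> _]]|[_ [_ H]]]].
- left; apply: sqrt_bound; by rewrite E.
- by right.
- left; lia.
Qed.

Lemma G1_irr p : ~ G1_edge p p.
Proof.
case: p => n s; rewrite /G1_edge /=.
case=> [[_ [H _]]|[[-> [H _]] |[-> [H _]]]] //.
Qed.

Lemma big_image (GT : nat -> nat -> finType) (Ge : forall j i, rel (GT j i))
  (Hchi : forall j i, chi_ge (Ge j i) i)
  (eta : TV -> nat * nat) (f : Geta_vert GT eta -> nat * bool)
  (Hf : forall u v, Geta_edge Ge u v -> G1_edge (f u) (f v)) x N :
  2 * N < (eta x).2 ->
  exists a : GT (eta x).1 (eta x).2, N <= (f (existT _ x a)).1.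
Proof.
move=> HN.
case: (boolP [exists a, N <= (f (existT _ x a)).1]).
  by move=> /existsP [a Ha]; exists a.
move=> /existsPn Hall.
exfalso.
apply: (Hchi (eta x).1 (eta x).2 (2 * N) HN).
exists (fun a => 2 * (f (existT _ x a)).1 + (f (existT _ x a)).2).
split.
  move=> a; have := Hall a; rewrite -ltnNge.
  case: (f _).2 => /=; lia.
move=> a b Hab Hc.
have He : Geta_edge Ge (existT _ x a) (existT _ x b).
  by left; exists x, a, b.
have := Hf _ _ He.
have -> : f (existT _ x a) = f (existT _ x b).
  move: Hc.
  case: (f (existT _ x a)) => [m1 s1]; case: (f (existT _ x b)) => [m2 s2] /=.
  case: s1; case: s2 => /= E; try lia; congr pair; lia.
by apply: G1_irr.
Qed.

Theorem claim4
  (GT : nat -> nat -> finType) (Ge : forall j i, rel (GT j i))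
  (Hsym : forall j i, symmetric (Ge j i))
  (Hirr : forall j i, irreflexive (Ge j i))
  (Hne : forall j i, 0 < #|GT j i|)
  (Hchi : forall j i, chi_ge (Ge j i) i)
  (Hodd : forall j i, no_short_odd_cycle (Ge j i) j)
  (eta : TV -> nat * nat)
  (Hub1 : forall b, exists i, b < (eta (V1 i)).2)
  (Hub2 : forall i b, exists j, b < (eta (V2 i j)).2) :
  ~ exists f : Geta_vert GT eta -> nat * bool,
      forall u v, Geta_edge Ge u v -> G1_edge (f u) (f v).
Proof.
case=> f Hf.
case/card_gt0P: (Hne (eta Vr).1 (eta Vr).2) => a0 _.
set n := (f (existT _ Vr a0)).1.
have [i Hi] := Hub1 (2 * (n.+1 * n.+1)).
have [b Hb] := @big_image GT Ge Hchi eta f Hf (V1 i) _ Hi.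
have E1 : Geta_edge Ge (existT _ Vr a0) (existT _ (V1 i) b) by right.
case: (@G1_bound _ _ (Hf _ _ E1)) => [H|[_ Hbt]].
  rewrite -/n in H; lia.
set m := (f (existT _ (V1 i) b)).1.
have [j Hj] := Hub2 i (2 * (m.+1 * m.+1)).
have [c Hc] := @big_image GT Ge Hchi eta f Hf (V2 i j) _ Hj.
have E2 : Geta_edge Ge (existT _ (V1 i) b) (existT _ (V2 i j) c) by right.
case: (@G1_bound _ _ (Hf _ _ E2)) => [H|[Hbf _]].
  rewrite -/m in H; lia.
by rewrite Hbt in Hbf.
Qed.
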